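(* Let $f_1,\dots,f_n:\mathbb{R}^d\to\mathbb{R}$ be such that each $f_i$ is $L_i$-smooth and $\mu_i$-strongly convex, with minimizer $x_i$. Let $\alpha_1,\dots,\alpha_n\in(0,1)$, $\tilde f(x) = \frac{1}{n}\sum_{i=1}^n f_i(\alpha_i x + (1-\alpha_i)x_i)$, $\hat L = \frac{1}{n}\sum_i L_i$, $\hat\mu = \frac{1}{n}\sum_i \mu_i$, $L_\alpha = \frac{1}{n}\sum_i \alpha_i^2 L_i$, $\mu_\alpha = \frac{1}{n}\sum_i\alpha_i^2\mu_i$, $w_i = \frac{\alpha_i^2 L_i}{nL_\alpha}$, $x^{\mathrm{avg}} = \sum_i w_i x_i$, $D = \max_{i\neq j}\|x_i-x_j\|^2$ and $V = \sum_i w_i\|x_i - x^{\mathrm{avg}}\|^2$. Run distributed gradient descent $x^{k+1} = x^k - \frac{\gamma}{n}\sum_{i=1}^n \alpha_i \nabla f_i(\alpha_i x^k + (1-\alpha_i)x_i)$ with stepsize $\gamma = 1/L_\alpha$, starting from $x^0 = x^{\mathrm{avg}}$. Then for every $K \geq 0$: (i) with $\alpha_{\max} = \max_i \alpha_i$, $\tilde f(x^K) - \min_x \tilde f(x) \leq \left(1 - \frac{\mu_\alpha}{L_\alpha}\right)^K \frac{\alpha_{\max}^2 \hat L D}{2}$; (ii) if $\alpha_i = \beta$ for all $i$, then $\tilde f(x^K) - \min_x\tilde f(x) \leq \left(1 - \frac{\hat\mu}{\hat L}\right)^K \frac{\beta^2\hat L V}{2}$.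
   Context: A differentiable $g$ is $L$-smooth if $\|\nabla g(x)-\nabla g(y)\|\leq L\|x-y\|$ for all $x,y$, and $\mu$-strongly convex if $g(x)\geq g(y)+\langle\nabla g(y),x-y\rangle+\frac{\mu}{2}\|x-y\|^2$ for all $x,y$. *)

(* Defs.v *)
From HB Require Import structures.
From mathcomp Require Import all_boot all_order all_algebra.
From mathcomp Require Import all_classical all_reals all_analysis.
Set Implicit Arguments. Unset Strict Implicit. Unset Printing Implicit Defensive.
Import Order.TTheory GRing.Theory Num.Theory.
Import numFieldNormedType.Exports.
Local Open Scope ring_scope.

Section Defs.
Variables (R : realType) (d : nat).

(* Euclidean inner product and Euclidean norm on R^d
   (the default norm on 'rV[R]_d in MathComp-Analysis is the sup norm,
   so we use the Euclidean one explicitly). *)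
Definition dot (u v : 'rV[R]_d) : R := \sum_(j < d) u 0 j * v 0 j.
Definition enorm (u : 'rV[R]_d) : R := Num.sqrt (dot u u).

Definition grad (f : 'rV[R]_d -> R) (x : 'rV[R]_d) : 'rV[R]_d :=
  \row_(j < d) ('d f x (delta_mx 0 j : 'rV[R]_d) : R).

Definition smooth (L : R) (f : 'rV[R]_d -> R) : Prop :=
  (forall x, differentiable f x) /\
  forall x y, enorm (grad f x - grad f y) <= L * enorm (x - y).

Definition strongly_convex (mu : R) (f : 'rV[R]_d -> R) : Prop :=
  forall x y, f y + dot (grad f y) (x - y) + mu / 2 * enorm (x - y) ^+ 2 <= f x.

End Defs.

(* Main.v *)
Require Import Defs.
From HB Require Import structures.
From mathcomp Require Import all_boot all_order all_algebra.
From mathcomp Require Import all_classical all_reals all_analysis.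
From mathcomp Require Import ring lra.
Import Order.TTheory GRing.Theory Num.Theory.
Import numFieldNormedType.Exports.
Local Open Scope ring_scope.

Section Dot.
Variables (R : realType) (d : nat).
Implicit Types u v w : 'rV[R]_d.
Local Notation dot := (@dot R d).
Local Notation enorm := (@enorm R d).

Lemma dotC u v : dot u v = dot v u.
Proof. by apply: eq_bigr => j _; rewrite mulrC. Qed.
Lemma dotDl u v w : dot (u + v) w = dot u w + dot v w.
Proof. by rewrite /Defs.dot -big_split; apply: eq_bigr => j _; rewrite mxE mulrDl. Qed.
Lemma dotZl c u v : dot (c *: u) v = c * dot u v.
Proof. by rewrite /Defs.dot mulr_sumr; apply: eq_bigr => j _; rewrite mxE mulrA. Qed.
Lemma dotNl u v : dot (- u) v = - dot u v.
Proof. by rewrite -scaleN1r dotZl mulN1r. Qed.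
Lemma dotBl u v w : dot (u - v) w = dot u w - dot v w.
Proof. by rewrite dotDl dotNl. Qed.
Lemma dotDr u v w : dot w (u + v) = dot w u + dot w v.
Proof. by rewrite dotC dotDl !(dotC w). Qed.
Lemma dotZr c u v : dot v (c *: u) = c * dot v u.
Proof. by rewrite dotC dotZl dotC. Qed.
Lemma dotNr u v : dot v (- u) = - dot v u.
Proof. by rewrite dotC dotNl dotC. Qed.
Lemma dotBr u v w : dot w (u - v) = dot w u - dot w v.
Proof. by rewrite dotDr dotNr. Qed.
Lemma dot0l v : dot 0 v = 0.
Proof. by rewrite -(scale0r 0) dotZl mul0r. Qed.
Lemma dot0r v : dot v 0 = 0.
Proof. by rewrite dotC dot0l. Qed.
Lemma dot_suml n (F : 'I_n -> 'rV[R]_d) v :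
  dot (\sum_(i < n) F i) v = \sum_(i < n) dot (F i) v.
Proof. exact: (big_morph (fun u => dot u v) (fun u w => dotDl u w v) (dot0l v)). Qed.
Lemma dot_ge0 u : 0 <= dot u u.
Proof. by apply: sumr_ge0 => j _; rewrite -expr2 sqr_ge0. Qed.
Lemma dot_eq0 u : dot u u = 0 -> u = 0.
Proof.
move=> h; apply/rowP => j; rewrite mxE.
have h2 : \sum_(k < d) u 0 k ^+ 2 = 0.
  rewrite -[RHS]h /Defs.dot; by apply: eq_bigr => k _; rewrite expr2.
have := psumr_eq0P (P := xpredT) (fun k _ => sqr_ge0 (u 0 k)) h2.
by move=> /(_ j isT) /eqP; rewrite sqrf_eq0 => /eqP.
Qed.
Lemma enorm_sq u : enorm u ^+ 2 = dot u u.
Proof. exact: sqr_sqrtr (dot_ge0 u). Qed.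
Lemma enorm_ge0 u : 0 <= enorm u.
Proof. exact: sqrtr_ge0. Qed.
Lemma dot_expand u v : dot (u - v) (u - v) = dot u u - 2 * dot u v + dot v v.
Proof. rewrite dotBl !dotBr (dotC v u). lra. Qed.

Lemma CS u v : dot u v <= enorm u * enorm v.
Proof.
set a := enorm u; set b := enorm v.
have ha : 0 <= a := enorm_ge0 u. have hb : 0 <= b := enorm_ge0 v.
have h := dot_ge0 (b *: u - a *: v).
rewrite dotBl !dotBr !dotZl !dotZr -!enorm_sq (dotC v u) -/a -/b in h.
have {}h : 0 <= (a * b) * (a * b - dot u v) by nra.
have [hab|hab] := ltrP 0 (a * b).
  by rewrite -subr_ge0; rewrite pmulr_rge0 in h.
have hab0 : a * b = 0 by apply/le_anti; rewrite hab mulr_ge0.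
rewrite hab0; move/eqP: hab0; rewrite mulf_eq0 => /orP[]/eqP h0.
  have : dot u u = 0 by rewrite -enorm_sq -/a h0 expr0n.
  by move/dot_eq0 ->; rewrite dot0l.
have : dot v v = 0 by rewrite -enorm_sq -/b h0 expr0n.
by move/dot_eq0 ->; rewrite dot0r.
Qed.
End Dot.

Lemma lim0 (R : realType) (a c : R) : (forall N : nat, a <= c / N.+1%:R) -> a <= 0.
Proof.
move=> h; rewrite leNgt; apply/negP => ha.
have [hc|hc] := lerP c 0.
  have := h 0%N; rewrite divr1 => h1; lra.
have hca : 0 <= c / a by rewrite divr_ge0 // ltW.
have hb := archi_boundP hca.
set N := Num.Def.archi_bound (c / a) in hb.
have := h N; rewrite ler_pdivlMr ?ltr0Sn // => h2.
have h3 : N%:R < N.+1%:R :> R by rewrite ltr_nat.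
rewrite ltr_pdivrMr // in hb.
have : c < a * N.+1%:R by apply: (lt_le_trans hb); rewrite mulrC ler_pM2l // ltW.
lra.
Qed.

Section Enorm.
Variables (R : realType) (d : nat).
Lemma enormZ (c : R) (u : 'rV[R]_d) : enorm (c *: u) = `|c| * enorm u.
Proof.
by rewrite /enorm dotZl dotZr mulrA -expr2 sqrtrM ?sqr_ge0 // sqrtr_sqr.
Qed.
End Enorm.

Section Descent.
Variables (R : realType) (d : nat) (f : 'rV[R]_d -> R) (L mu : R).
Hypothesis hmu : 0 <= mu.
Hypothesis hc : strongly_convex mu f.
Hypothesis hl : forall x y, enorm (grad f x - grad f y) <= L * enorm (x - y).
Local Notation G := (grad f).

Lemma cvx x y : f y + dot (G y) (x - y) <= f x.
Proof.
apply: le_trans (hc x y); rewrite lerDl mulr_ge0 ?sqr_ge0 //.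
by rewrite divr_ge0.
Qed.

Lemma descent x y : f y <= f x + dot (G x) (y - x) + L / 2 * dot (y - x) (y - x).
Proof.
set h := y - x; set s := dot (G x) h; set q := dot h h.
suff H : f y - f x - s - L / 2 * q <= 0 by lra.
apply: (@lim0 _ _ (L * q / 2)) => N.
set N1 : R := N.+1%:R.
have hN1 : 0 < N1 by rewrite ltr0Sn.
set t := N1^-1.
pose p (k : nat) := x + (k%:R * t) *: h.
have claim : forall k : nat, f (p k) - f x <= k%:R * t * s + L * q * t ^+ 2 * (k%:R * (k%:R + 1)) / 2.
  elim => [|k IH].
    rewrite /p !mul0r scale0r addr0 subrr; lra.
  have step : f (p k.+1) - f (p k) <= t * s + L * (k%:R + 1) * t ^+ 2 * q.
    have c1 := cvx (p k) (p k.+1).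
    have e0 : p k.+1 = p k + t *: h.
      by rewrite /p -addrA -scalerDl mulrSr mulrDl mul1r.
    have e1 : p k - p k.+1 = - (t *: h).
      by rewrite e0 opprD addrA subrr add0r.
    have e2 : p k.+1 - x = ((k%:R + 1) * t) *: h.
      by rewrite /p addrAC subrr add0r mulrSr.
    rewrite e1 dotNr dotZr in c1.
    have c2 : dot (G (p k.+1)) h = s + dot (G (p k.+1) - G x) h by rewrite dotBl /s addrC subrK.
    have c3 := CS _ _ (G (p k.+1) - G x) h.
    have c4 := hl (p k.+1) x.
    have ht : 0 <= t by rewrite invr_ge0 ltW.
    have hk : 0 <= (k%:R + 1) * t by rewrite mulr_ge0 // addr_ge0 ?ler01 ?ler0n.
    rewrite e2 enormZ (ger0_norm hk) in c4.
      have hh := enorm_ge0 _ _ h.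
      have c5 : enorm (G (p k.+1) - G x) * enorm h <= L * ((k%:R + 1) * t * enorm h) * enorm h.
        by rewrite ler_wpM2r.
      have hq : enorm h * enorm h = q by rewrite -expr2 enorm_sq.
      have : t * dot (G (p k.+1) - G x) h <= t * (L * ((k%:R + 1) * t * enorm h) * enorm h).
        by rewrite ler_wpM2l //; apply: le_trans c5.
      have -> : t * (L * ((k%:R + 1) * t * enorm h) * enorm h) = L * (k%:R + 1) * t ^+ 2 * q.
        by rewrite -hq expr2; ring.
      rewrite c2 in c1; move=> c6.
      have : t * (s + dot (G (p k.+1) - G x) h) = t * s + t * dot (G (p k.+1) - G x) h by ring.
      lra.
  have e : L * q * t ^+ 2 * (k.+1%:R * (k.+1%:R + 1)) / 2 =
           L * q * t ^+ 2 * (k%:R * (k%:R + 1)) / 2 + L * (k%:R + 1) * t ^+ 2 * q.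
    have -> : k.+1%:R = k%:R + 1 :> R by rewrite mulrSr.
    by field.
  have ek : k.+1%:R = k%:R + 1 :> R by rewrite mulrSr.
  rewrite e ek; lra.
have := claim N.+1.
have -> : p N.+1 = y by rewrite /p -/N1 /t mulfV ?gt_eqF // scale1r /h addrC subrK.
have -> : N.+1%:R * t = 1 by rewrite mulfV ?gt_eqF.
have -> : L * q * t ^+ 2 * (N.+1%:R * (N.+1%:R + 1)) / 2 = L / 2 * q + L * q / 2 / N1.
  rewrite -/N1 /t; field; by rewrite gt_eqF.
move=> H; have E : L * q / 2 / N1 = L * q / 2 * t by []. move: H; rewrite E; lra.
Qed.
End Descent.

Lemma dot_const1 (R : realType) d : dot (const_mx 1 : 'rV[R]_d) (const_mx 1) = d%:R.
Proof.
rewrite /dot; under eq_bigr do rewrite mxE mulr1.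
by rewrite sumr_const card_ord.
Qed.

Section More.
Variables (R : realType) (d : nat) (f : 'rV[R]_d -> R) (L mu : R).
Hypothesis hmu : 0 < mu.
Hypothesis hc : strongly_convex mu f.
Hypothesis hl : forall x y, enorm (grad f x - grad f y) <= L * enorm (x - y).
Local Notation G := (grad f).

Lemma t1 (u : 'rV[R]_d) : f 0 + dot (G 0) u + mu / 2 * dot u u <= f u.
Proof. have c1 := hc u 0. by rewrite subr0 enorm_sq in c1. Qed.
Lemma t2 (u : 'rV[R]_d) : f u - dot (G u) u + mu / 2 * dot u u <= f 0.
Proof. have c2 := hc 0 u. by rewrite sub0r enorm_sq dotNl !dotNr opprK in c2. Qed.
Lemma t3 (u : 'rV[R]_d) : dot (G u) u - dot (G 0) u <= L * dot u u.
Proof.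
have c3 := CS _ _ (G u - G 0) u.
have c4 := hl u 0. rewrite subr0 in c4.
have c5 : enorm (G u - G 0) * enorm u <= L * enorm u * enorm u.
  by rewrite ler_wpM2r // enorm_ge0.
rewrite -mulrA -expr2 enorm_sq dotBl in c5 c3.
exact: le_trans c3 c5.
Qed.

Lemma t4 (a b q f0 fu : R) : 0 < q -> f0 + b + mu/2*q <= fu -> fu - a + mu/2*q <= f0 -> a - b <= L*q -> mu <= L.
Proof. move=> hq c1 c2 c3. have : mu * q <= L * q by lra. by rewrite ler_pM2r. Qed.

Lemma hq0 : (0 < d)%N -> 0 < dot (const_mx 1 : 'rV[R]_d) (const_mx 1).
Proof. by move=> hd; rewrite dot_const1 ltr0n. Qed.

Lemma mu_le_L : (0 < d)%N -> mu <= L.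
Proof.
move=> hd.
have h1 := hq0 hd. have h2 := t1 (const_mx 1). have h3 := t2 (const_mx 1). have h4 := t3 (const_mx 1). exact (@t4 _ _ _ _ _ h1 h2 h3 h4).
Qed.

Lemma alg1 (g fm fy : R) : 0 < L -> 0 <= g -> fm <= fy ->
  fy <= fm + - (L^-1 * g) + L / 2 * (L^-1 * (L^-1 * g)) -> g = 0.
Proof.
move=> hL hg h1 h2.
have e : L / 2 * (L^-1 * (L^-1 * g)) = L^-1 * g / 2 by field; rewrite gt_eqF.
rewrite e in h2.
have : L^-1 * g <= 0 by lra.
rewrite pmulr_rle0 ?invr_gt0 // => hg0.
by apply/le_anti; rewrite hg0 hg.
Qed.

Lemma grad_min xm : (forall y, f xm <= f y) -> 0 < L -> forall h, dot (G xm) h = 0.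
Proof.
move=> hm hL h.
have hd := @descent R d f L mu (ltW hmu) hc hl xm (xm - L^-1 *: G xm).
have e : xm - L^-1 *: G xm - xm = - (L^-1 *: G xm) by rewrite addrAC subrr add0r.
rewrite e !dotNl !dotNr opprK !dotZl !dotZr in hd.
have := @alg1 _ _ _ hL (dot_ge0 _ _ (G xm)) (hm _) hd.
by move/dot_eq0 ->; rewrite dot0l.
Qed.
End More.

Section Jensen.
Variables (R : realType) (d : nat).
Lemma jensen (m : nat) (w : 'I_m -> R) (u : 'I_m -> 'rV[R]_d) :
  (forall j, 0 <= w j) -> \sum_j w j = 1 ->
  dot (\sum_j w j *: u j) (\sum_j w j *: u j) <= \sum_j w j * dot (u j) (u j).
Proof.
move=> hw h1.
set M := \sum_j w j *: u j.
have h0 : 0 <= \sum_j w j * dot (u j - M) (u j - M).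
  by apply: sumr_ge0 => j _; rewrite mulr_ge0 // dot_ge0.
have eM : dot M M = \sum_j w j * dot (u j) M.
  by rewrite {1}/M dot_suml; apply: eq_bigr => j _; rewrite dotZl.
have e : \sum_j w j * dot (u j - M) (u j - M) =
         \sum_j w j * dot (u j) (u j) - 2 * \sum_j w j * dot (u j) M + (\sum_j w j) * dot M M.
  rewrite [in RHS]mulr_sumr [in RHS]mulr_suml -[in RHS]sumrN -[in RHS]big_split -[in RHS]big_split /=; apply: eq_bigr => j _.
  by rewrite dot_expand; ring.
rewrite e -eM h1 mul1r in h0.
move: h0; set a := \sum_j _; set b := dot M M; lra.
Qed.
End Jensen.

Lemma contr_alg (R : realType) (a b g s qh Fx Fx' Fz : R) : 0 < a -> 0 < b ->
  0 <= g + 2 * b * s + b ^+ 2 * qh ->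
  Fx' <= Fx + - (a^-1 * g) + a / 2 * (a^-1 * (a^-1 * g)) ->
  Fx + s + b / 2 * qh <= Fz ->
  Fx' - Fz <= (1 - b / a) * (Fx - Fz).
Proof.
move=> ha hb hq hU hL.
have e1 : a / 2 * (a^-1 * (a^-1 * g)) = a^-1 * g / 2 by field; rewrite gt_eqF.
rewrite e1 in hU.
have h1 : b * (Fx - Fz) <= g / 2.
  have : Fx - Fz <= - s - b / 2 * qh by lra.
  move/(ler_wpM2l (ltW hb)) => h.
  have e2 : b * (- s - b / 2 * qh) = - (b * s) - b ^+ 2 * qh / 2 by rewrite expr2; field.
  rewrite e2 in h.
  lra.
have h2 : b / a * (Fx - Fz) <= a^-1 * g / 2.
  have hai : 0 <= a^-1 by rewrite invr_ge0 ltW.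
  have := ler_wpM2l hai h1.
  have -> : a^-1 * (b * (Fx - Fz)) = b / a * (Fx - Fz) by rewrite mulrA [a^-1 * b]mulrC.
  have -> : a^-1 * (g / 2) = a^-1 * g / 2 by rewrite mulrA.
  by [].
lra.
Qed.

Lemma le_bigmax (R : realType) (m : nat) (F : 'I_m -> R) (P : pred 'I_m) j :
  P j -> F j <= \big[Num.max/0]_(i < m | P i) F i.
Proof. by move=> Pj; rewrite (bigD1 j) //= le_max lexx. Qed.
Lemma le_bigmax' (R : realType) (m : nat) (F : 'I_m -> R) j :
  F j <= \big[Num.max/0]_(i < m) F i.
Proof. by rewrite (bigD1 j) //= le_max lexx. Qed.
Lemma bigmax_ge0 (R : realType) (m : nat) (F : 'I_m -> R) (P : pred 'I_m) :
  (forall i, 0 <= F i) -> 0 <= \big[Num.max/0]_(i < m | P i) F i.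
Proof.
move=> hF; elim/big_ind: _ => //= x y hx hy.
by rewrite le_max hx.
Qed.

Section Main.
Variables (R : realType) (d n : nat) (f : 'I_n -> 'rV[R]_d -> R) (L mu : 'I_n -> R)
  (xs : 'I_n -> 'rV[R]_d) (alpha : 'I_n -> R).
Hypothesis hn : (0 < n)%N.
Hypothesis hmu : forall i, 0 < mu i.
Hypothesis hsmooth : forall i, smooth (L i) (f i).
Hypothesis hconv : forall i, strongly_convex (mu i) (f i).
Hypothesis hmin : forall i y, f i (xs i) <= f i y.
Hypothesis halpha : forall i, 0 < alpha i < 1.

Definition yy i (x : 'rV[R]_d) := alpha i *: x + (1 - alpha i) *: xs i.
Definition ft x := n%:R^-1 * \sum_(i < n) f i (yy i x).
Definition Gt x := n%:R^-1 *: \sum_(i < n) alpha i *: grad (f i) (yy i x).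
Definition La := n%:R^-1 * \sum_(i < n) (alpha i ^+ 2 * L i).
Definition mua := n%:R^-1 * \sum_(i < n) (alpha i ^+ 2 * mu i).

Lemma y_diff i x x' : yy i x' - yy i x = alpha i *: (x' - x).
Proof. by rewrite /yy opprD addrACA subrr addr0 scalerBr. Qed.
Lemma y_xs i : yy i (xs i) = xs i.
Proof. by rewrite /yy -scalerDl addrCA subrr addr0 scale1r. Qed.

Lemma avg_eq (A c : 'I_n -> R) (g : 'I_n -> 'rV[R]_d) h q :
  n%:R^-1 * \sum_i (A i + alpha i * dot (g i) h + c i * (alpha i * (alpha i * q)))
  = n%:R^-1 * \sum_i A i + dot (n%:R^-1 *: \sum_i alpha i *: g i) h
    + (n%:R^-1 * \sum_i (alpha i ^+ 2 * c i)) * q.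
Proof.
rewrite !big_split /= dotZl dot_suml !mulrDr.
congr (_ + _ + _).
  by congr (_ * _); apply: eq_bigr => i _; rewrite dotZl.
rewrite -mulrA mulr_suml; congr (_ * _); apply: eq_bigr => i _; rewrite expr2; ring.
Qed.

Lemma hl i : forall x y, enorm (grad (f i) x - grad (f i) y) <= L i * enorm (x - y).
Proof. exact: (hsmooth i).2. Qed.

Lemma UB x x' : ft x' <= ft x + dot (Gt x) (x' - x) + La / 2 * dot (x' - x) (x' - x).
Proof.
have hi : forall i, f i (yy i x') <= f i (yy i x) + alpha i * dot (grad (f i) (yy i x)) (x' - x)
   + L i / 2 * (alpha i * (alpha i * dot (x' - x) (x' - x))).
  move=> i; have := @descent R d (f i) (L i) (mu i) (ltW (hmu i)) (hconv i) (@hl i) (yy i x) (yy i x').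
  by rewrite y_diff !dotZl !dotZr.
have := ler_sum (index_enum 'I_n) (fun i (_ : true) => hi i).
move/(ler_wpM2l (_ : 0 <= n%:R^-1)); rewrite invr_ge0 ler0n => /(_ isT).
have E := avg_eq (fun i => f i (yy i x)) (fun i => L i / 2) (fun i => grad (f i) (yy i x)) (x' - x) (dot (x' - x) (x' - x)).
cbv beta in E; rewrite E.
have -> : n%:R^-1 * \sum_i (alpha i ^+ 2 * (L i / 2)) = La / 2.
  by rewrite /La -mulrA mulr_suml; congr (_ * _); apply: eq_bigr => i _; rewrite mulrA.
by [].
Qed.

Lemma LB x z : ft x + dot (Gt x) (z - x) + mua / 2 * dot (z - x) (z - x) <= ft z.
Proof.
have hi : forall i, f i (yy i x) + alpha i * dot (grad (f i) (yy i x)) (z - x)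
   + mu i / 2 * (alpha i * (alpha i * dot (z - x) (z - x))) <= f i (yy i z).
  move=> i; have := hconv i (yy i z) (yy i x).
  by rewrite y_diff enorm_sq !dotZl !dotZr.
have := ler_sum (index_enum 'I_n) (fun i (_ : true) => hi i).
move/(ler_wpM2l (_ : 0 <= n%:R^-1)); rewrite invr_ge0 ler0n => /(_ isT).
have E := avg_eq (fun i => f i (yy i x)) (fun i => mu i / 2) (fun i => grad (f i) (yy i x)) (z - x) (dot (z - x) (z - x)).
cbv beta in E; rewrite E.
have -> : n%:R^-1 * \sum_i (alpha i ^+ 2 * (mu i / 2)) = mua / 2.
  by rewrite /mua -mulrA mulr_suml; congr (_ * _); apply: eq_bigr => i _; rewrite mulrA.
by [].
Qed.

Hypothesis hd : (0 < d)%N.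

Lemma LmuLe i : mu i <= L i.
Proof. exact: (@mu_le_L R d (f i) (L i) (mu i) (hconv i) (@hl i) hd). Qed.
Lemma Lpos i : 0 < L i.
Proof. exact: lt_le_trans (hmu i) (LmuLe i). Qed.
Lemma a_pos i : 0 < alpha i.
Proof. by case/andP: (halpha i). Qed.

Lemma sum_pos (F : 'I_n -> R) : (forall i, 0 < F i) -> 0 < \sum_i F i.
Proof.
move=> h; rewrite (bigD1 (Ordinal hn)) //=.
apply: (lt_le_trans (h (Ordinal hn))); rewrite lerDl sumr_ge0 // => i _; exact: ltW.
Qed.

Lemma La_pos : 0 < La.
Proof.
rewrite /La mulr_gt0 ?invr_gt0 ?ltr0n // sum_pos // => i.
by rewrite mulr_gt0 ?exprn_gt0 ?Lpos ?a_pos.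
Qed.
Lemma mua_pos : 0 < mua.
Proof.
rewrite /mua mulr_gt0 ?invr_gt0 ?ltr0n // sum_pos // => i.
by rewrite mulr_gt0 ?exprn_gt0 ?hmu ?a_pos.
Qed.
Lemma mua_le_La : mua <= La.
Proof.
rewrite /mua /La; apply: ler_wpM2l; first by rewrite invr_ge0 ler0n.
apply: ler_sum => i _; apply: ler_wpM2l; last exact: LmuLe.
by rewrite exprn_ge0 // ltW ?a_pos.
Qed.

Definition stp x := x - (La^-1 / n%:R) *: \sum_(i < n)
          (alpha i *: grad (f i) (alpha i *: x + (1 - alpha i) *: xs i)).
Lemma stp_eq x : stp x = x - La^-1 *: Gt x.
Proof. by rewrite /stp /Gt scalerA. Qed.

Lemma contr_gen x z (G : 'rV[R]_d) :
  (forall x', ft x' <= ft x + dot G (x' - x) + La / 2 * dot (x' - x) (x' - x)) ->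
  ft x + dot G (z - x) + mua / 2 * dot (z - x) (z - x) <= ft z ->
  ft (x - La^-1 *: G) - ft z <= (1 - mua / La) * (ft x - ft z).
Proof.
move=> hUB hL.
have hU := hUB (x - La^-1 *: G).
have e : x - La^-1 *: G - x = - (La^-1 *: G) by rewrite addrAC subrr add0r.
rewrite e !dotNl !dotNr opprK !dotZl !dotZr in hU.
have hq := dot_ge0 _ _ (G + mua *: (z - x)).
rewrite !dotDl !dotDr !dotZl !dotZr (dotC _ _ (z - x) G) in hq.
apply: (@contr_alg _ _ _ _ _ _ _ _ _ La_pos mua_pos _ hU hL).
apply: (le_trans hq); rewrite le_eqVlt; apply/orP; left; apply/eqP.
ring.
Qed.

Lemma contr_step x z : ft (stp x) - ft z <= (1 - mua / La) * (ft x - ft z).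
Proof. by rewrite stp_eq; apply: contr_gen; [move=> x'; exact: UB | exact: LB]. Qed.

Lemma iter_bound x0 z K : ft (iter K stp x0) - ft z <= (1 - mua / La) ^+ K * (ft x0 - ft z).
Proof.
elim: K => [|K IH]; first by rewrite expr0 mul1r.
rewrite iterS exprS -mulrA.
apply: le_trans (contr_step _ z) _.
apply: ler_wpM2l; last exact: IH.
by rewrite subr_ge0 ler_pdivrMr ?La_pos // mul1r mua_le_La.
Qed.

Definition B0 x := n%:R^-1 * \sum_i (L i / 2 * (alpha i * (alpha i * dot (x - xs i) (x - xs i)))).

Lemma init_bound x z : ft x - ft z <= B0 x.
Proof.
have hi : forall i, f i (yy i x) <= f i (xs i) + L i / 2 * (alpha i * (alpha i * dot (x - xs i) (x - xs i))).
  move=> i.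
  have := @descent R d (f i) (L i) (mu i) (ltW (hmu i)) (hconv i) (@hl i) (xs i) (yy i x).
  have e : yy i x - xs i = alpha i *: (x - xs i) by rewrite -{1}(y_xs i) y_diff.
  rewrite e (@grad_min R d (f i) (L i) (mu i) (hmu i) (hconv i) (@hl i) (xs i) (hmin i) (Lpos i)) addr0 !dotZl !dotZr.
  done.
have h1 := ler_sum (index_enum 'I_n) (fun i (_ : true) => hi i).
have h2 : \sum_i f i (xs i) <= \sum_i f i (yy i z) by apply: ler_sum => i _; exact: hmin.
rewrite big_split /= in h1.
rewrite /ft /B0 -mulrBr; apply: ler_wpM2l; first by rewrite invr_ge0 ler0n.
apply: le_trans (lerB h1 h2) _.
by rewrite addrAC subrr add0r.
Qed.

Definition w i := alpha i ^+ 2 * L i / (n%:R * La).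
Definition xavg := \sum_(i < n) w i *: xs i.
Definition Dm := \big[Num.max/0]_(i < n) \big[Num.max/0]_(j < n | i != j) enorm (xs i - xs j) ^+ 2.
Definition Vv := \sum_(i < n) w i * enorm (xs i - xavg) ^+ 2.
Definition Lhat := n%:R^-1 * \sum_(i < n) L i.
Definition muhat := n%:R^-1 * \sum_(i < n) mu i.
Definition amax := \big[Num.max/0]_(i < n) alpha i.

Lemma w_ge0 i : 0 <= w i.
Proof.
rewrite /w divr_ge0 //; first by rewrite mulr_ge0 ?exprn_ge0 // ltW ?a_pos ?Lpos.
by rewrite mulr_ge0 ?ler0n // ltW ?La_pos.
Qed.

Lemma w_sum : \sum_i w i = 1.
Proof.
have hS : 0 < \sum_(i < n) (alpha i ^+ 2 * L i).
  by apply: sum_pos => i; rewrite mulr_gt0 ?exprn_gt0 ?Lpos ?a_pos.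
have hn0 : n%:R != 0 :> R by rewrite pnatr_eq0 -lt0n.
rewrite /w -mulr_suml /La mulrA divff // mul1r divff //.
by rewrite gt_eqF.
Qed.

Lemma Dm_ge0 : 0 <= Dm.
Proof.
rewrite /Dm; elim/big_ind: _ => //= [x y hx hy|i _]; first by rewrite le_max hx.
elim/big_ind: _ => //= [x y hx hy|j _]; first by rewrite le_max hx.
exact: sqr_ge0.
Qed.

Lemma s_le_D i : dot (xavg - xs i) (xavg - xs i) <= Dm.
Proof.
have e : xavg - xs i = \sum_j w j *: (xs j - xs i).
  rewrite /xavg; under [RHS]eq_bigr do rewrite scalerBr.
  by rewrite sumrB -scaler_suml w_sum scale1r.
rewrite e.
apply: le_trans (@jensen R d n w (fun j => xs j - xs i) w_ge0 w_sum) _.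
apply: le_trans (_ : _ <= \sum_j w j * Dm) _; last by rewrite -mulr_suml w_sum mul1r.
apply: ler_sum => j _; apply: ler_wpM2l; first exact: w_ge0.
case: (eqVneq j i) => [->|hji]; first by rewrite subrr dot0l Dm_ge0.
rewrite -enorm_sq.
apply: le_trans (@le_bigmax R n (fun k => enorm (xs j - xs k) ^+ 2) (fun k => j != k) i hji) _.
exact: (@le_bigmax' R n (fun j => \big[Num.max/0]_(k < n | j != k) enorm (xs j - xs k) ^+ 2) j).
Qed.

Lemma B0_le : B0 xavg <= amax ^+ 2 * Lhat * Dm / 2.
Proof.
rewrite /B0.
apply: le_trans (_ : _ <= n%:R^-1 * \sum_i (L i / 2 * (amax * (amax * Dm)))) _.
  apply: ler_wpM2l; first by rewrite invr_ge0 ler0n.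
  apply: ler_sum => i _; apply: ler_wpM2l; first by rewrite divr_ge0 // ltW ?Lpos.
  have ha : alpha i <= amax by exact: (@le_bigmax' R n alpha i).
  have hs := dot_ge0 _ _ (xavg - xs i).
  apply: ler_pM; first by rewrite ltW ?a_pos.
      by rewrite mulr_ge0 // ltW ?a_pos.
    exact: ha.
  apply: ler_pM => //; first by rewrite ltW ?a_pos.
  exact: s_le_D.
rewrite -mulr_suml -mulr_suml /Lhat.
rewrite le_eqVlt; apply/orP; left; apply/eqP.
rewrite expr2; ring.
Qed.

Lemma main_gen K z : ft (iter K stp xavg) - ft z <= (1 - mua / La) ^+ K * B0 xavg.
Proof.
apply: le_trans (iter_bound xavg z K) _.
apply: ler_wpM2l; last exact: init_bound.
by rewrite exprn_ge0 // subr_ge0 ler_pdivrMr ?La_pos // mul1r mua_le_La.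
Qed.

Lemma qK_ge0 K : 0 <= (1 - mua / La) ^+ K.
Proof. by rewrite exprn_ge0 // subr_ge0 ler_pdivrMr ?La_pos // mul1r mua_le_La. Qed.

Lemma part1 K z : ft (iter K stp xavg) - ft z <= (1 - mua / La) ^+ K * (amax ^+ 2 * Lhat * Dm / 2).
Proof.
apply: le_trans (main_gen K z) _.
by apply: ler_wpM2l; [exact: qK_ge0 | exact: B0_le].
Qed.

Section Beta.
Variable beta : R.
Hypothesis hb : forall i, alpha i = beta.

Lemma Lhat_pos : 0 < Lhat.
Proof. by rewrite /Lhat mulr_gt0 ?invr_gt0 ?ltr0n // sum_pos // => i; exact: Lpos. Qed.
Lemma beta_pos : 0 < beta.
Proof. by rewrite -(hb (Ordinal hn)) a_pos. Qed.

Lemma eLa : La = beta ^+ 2 * Lhat.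
Proof.
rewrite /La /Lhat; under eq_bigr do rewrite hb.
by rewrite -mulr_sumr mulrCA.
Qed.
Lemma emua : mua = beta ^+ 2 * muhat.
Proof.
rewrite /mua /muhat; under eq_bigr do rewrite hb.
by rewrite -mulr_sumr mulrCA.
Qed.
Lemma q_eq : mua / La = muhat / Lhat.
Proof.
rewrite eLa emua; have hb0 := beta_pos; have hL0 := Lhat_pos.
field; rewrite ?gt_eqF // ?exprn_gt0 //.
Qed.

Lemma B0_eq : B0 xavg = beta ^+ 2 * Lhat * Vv / 2.
Proof.
have hb0 := beta_pos; have hL0 := Lhat_pos.
have hn0 : n%:R != 0 :> R by rewrite pnatr_eq0 -lt0n.
rewrite /B0 /Vv mulr_sumr mulr_sumr mulr_suml.
apply: eq_bigr => i _.
have -> : enorm (xs i - xavg) ^+ 2 = dot (xavg - xs i) (xavg - xs i).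
  by rewrite enorm_sq -opprB dotNl dotNr opprK.
rewrite /w eLa hb.
field; by rewrite hn0 !gt_eqF.
Qed.

Lemma part2 K z : ft (iter K stp xavg) - ft z <= (1 - muhat / Lhat) ^+ K * (beta ^+ 2 * Lhat * Vv / 2).
Proof. by rewrite -q_eq -B0_eq; exact: main_gen. Qed.
End Beta.
End Main.


Lemma enorm_d0 (R : realType) (u : 'rV[R]_0) : enorm u = 0.
Proof. by rewrite /enorm /dot big_ord0 sqrtr0. Qed.

Theorem theorem2 (R : realType) (d n : nat) (hn : (0 < n)%N)
  (f : 'I_n -> 'rV[R]_d -> R) (L mu : 'I_n -> R) (xs : 'I_n -> 'rV[R]_d)
  (alpha : 'I_n -> R)
  (hmu : forall i, 0 < mu i)
  (hsmooth : forall i, smooth (L i) (f i))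
  (hconv : forall i, strongly_convex (mu i) (f i))
  (hmin : forall i y, f i (xs i) <= f i y)
  (halpha : forall i, 0 < alpha i < 1) :
  let ftilde := fun x : 'rV[R]_d =>
    n%:R^-1 * \sum_(i < n) f i (alpha i *: x + (1 - alpha i) *: xs i) in
  let Lhat := n%:R^-1 * \sum_(i < n) L i in
  let muhat := n%:R^-1 * \sum_(i < n) mu i in
  let La := n%:R^-1 * \sum_(i < n) (alpha i ^+ 2 * L i) in
  let mua := n%:R^-1 * \sum_(i < n) (alpha i ^+ 2 * mu i) in
  let w := fun i => alpha i ^+ 2 * L i / (n%:R * La) in
  let xavg := \sum_(i < n) w i *: xs i in
  let D := \big[Num.max/0]_(i < n) \big[Num.max/0]_(j < n | i != j)
             enorm (xs i - xs j) ^+ 2 in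
  let V := \sum_(i < n) w i * enorm (xs i - xavg) ^+ 2 in
  let gamma := La^-1 in
  let step := fun x : 'rV[R]_d =>
    x - (gamma / n%:R) *: \sum_(i < n)
          (alpha i *: grad (f i) (alpha i *: x + (1 - alpha i) *: xs i)) in
  let xK := fun K : nat => iter K step xavg in
  let amax := \big[Num.max/0]_(i < n) alpha i in
  forall K : nat,
    (forall z, ftilde (xK K) - ftilde z <=
       (1 - mua / La) ^+ K * (amax ^+ 2 * Lhat * D / 2)) /\
    (forall beta : R, (forall i, alpha i = beta) ->
     forall z, ftilde (xK K) - ftilde z <=
       (1 - muhat / Lhat) ^+ K * (beta ^+ 2 * Lhat * V / 2)).
Proof.
move=> ftilde Lhat muhat La mua w xavg D V gamma step xK amax K.
have [d0|hd] := posnP d.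
  subst d.
  have hxz : forall z : 'rV[R]_0, xK K = z by move=> z; by apply/rowP => -[].
  have hD : D = 0.
    rewrite /D; elim/big_ind: _ => //= [x y -> ->|i _]; first by rewrite maxxx.
    elim/big_ind: _ => //= [x y -> ->|j _]; first by rewrite maxxx.
    by rewrite enorm_d0 expr0n.
  have hV : V = 0.
    by rewrite /V big1 // => i _; rewrite enorm_d0 expr0n mulr0.
  split => [z|beta hb z]; rewrite (hxz z) subrr ?hD ?hV !mulr0 ?mul0r ?mulr0 //.
split => [z|beta hb z].
  exact (@part1 R d n f L mu xs alpha hn hmu hsmooth hconv hmin halpha hd K z).
exact (@part2 R d n f L mu xs alpha hn hmu hsmooth hconv hmin halpha hd beta hb K z).
Qed.
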